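(* $$\lim_{t \to \infty} \sum_{n=0}^{\infty} N_{0,n}(t) = 2,$$ where $t\to\infty$ through the real numbers.
   Context: $N_{0,n}$ denotes the uniform B-spline of degree $n$ with knots $0,1,\ldots,n+1$ and support $[0,n+1]$: $N_{0,0}(t)=\chi_{[0,1]}(t)$ (the indicator of $[0,1]$) and $N_{0,n}(t)=\int_{-\infty}^{\infty} N_{0,n-1}(x)\chi_{[0,1]}(t-x)\,dx = \int_{t-1}^{t}N_{0,n-1}(x)\,dx$ for $n\ge1$; i.e. $N_{0,n}$ is the $(n+1)$-fold convolution of $\chi_{[0,1]}$ with itself (the Irwin–Hall density of a sum of $n+1$ independent Uniform$(0,1)$ variables). *)

(* Defs.v *)
From Stdlib Require Import Reals.
From Coquelicot Require Import Coquelicot.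
Open Scope R_scope.

Definition chi01 (t : R) : R :=
  if Rle_dec 0 t then (if Rle_dec t 1 then 1 else 0) else 0.

Fixpoint Bspl (n : nat) (t : R) : R :=
  match n with
  | O => chi01 t
  | S m => RInt (Bspl m) (t - 1) t
  end.

(* Main.v *)
Require Import Defs.
From Stdlib Require Import Reals Lra Lia Factorial.
From Coquelicot Require Import Coquelicot.
Open Scope R_scope.

Lemma lip_cont (f : R -> R) (K : R) (x : R) :
  (forall y z, Rabs (f y - f z) <= K * Rabs (y - z)) -> continuous f x.
Proof.
  intros H. apply continuity_pt_filterlim.
  intros eps Heps.
  exists (eps / (Rabs K + 1)). split.
  - apply Rdiv_lt_0_compat; [lra| pose proof (Rabs_pos K); lra].
  - intros y [_ Hy]. simpl in *. unfold R_dist in *.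
    eapply Rle_lt_trans; [apply H|].
    pose proof (Rabs_pos K).
    apply Rle_lt_trans with ((Rabs K + 1) * Rabs (y - x)).
    + apply Rmult_le_compat_r; [apply Rabs_pos| pose proof (Rle_abs K); lra].
    + apply Rmult_lt_reg_l with (/ (Rabs K + 1)). apply Rinv_0_lt_compat; lra.
      rewrite <- Rmult_assoc, Rinv_l by lra. rewrite Rmult_1_l.
      unfold Rdiv in Hy. lra.
Qed.

Lemma lip_ex_RInt (f : R -> R) (K : R) a b :
  (forall y z, Rabs (f y - f z) <= K * Rabs (y - z)) -> ex_RInt f a b.
Proof.
  intros H. apply (ex_RInt_continuous (V:=R_CompleteNormedModule)). intros z _. eapply lip_cont; eauto.
Qed.

Lemma Chas (f : R -> R) a b c : ex_RInt f a b -> ex_RInt f b c ->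
  RInt f a b + RInt f b c = RInt f a c.
Proof. intros. exact (RInt_Chasles (V:=R_CompleteNormedModule) f a b c H H0). Qed.

Lemma RInt_swap (f : R -> R) a b : ex_RInt f a b -> RInt f b a = - RInt f a b.
Proof. intros H. rewrite <- (opp_RInt_swap (V:=R_CompleteNormedModule) f a b H). reflexivity. Qed.

Lemma abs_RInt1 (f : R -> R) a b : (forall x, Rabs (f x) <= 1) ->
  (forall a b, ex_RInt f a b) -> Rabs (RInt f a b) <= Rabs (b - a).
Proof.
  intros H He. destruct (Rle_dec a b).
  - rewrite (Rabs_right (b - a)) by lra.
    replace (b - a) with ((b - a) * 1) by ring.
    apply abs_RInt_le_const; auto.
  - rewrite (RInt_swap f b a) by auto. rewrite Rabs_Ropp.
    rewrite (Rabs_left (b - a)) by lra.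
    replace (- (b - a)) with ((a - b) * 1) by ring.
    apply abs_RInt_le_const; auto. lra.
Qed.

Lemma chi01_bounds t : 0 <= chi01 t <= 1.
Proof. unfold chi01. destruct (Rle_dec 0 t); destruct (Rle_dec t 1); lra. Qed.
Lemma chi01_neg t : t < 0 -> chi01 t = 0.
Proof. unfold chi01. destruct (Rle_dec 0 t); intros; [lra|auto]. Qed.
Lemma chi01_gt1 t : 1 < t -> chi01 t = 0.
Proof. unfold chi01. destruct (Rle_dec 0 t); destruct (Rle_dec t 1); intros; lra. Qed.
Lemma chi01_in t : 0 <= t <= 1 -> chi01 t = 1.
Proof. unfold chi01. destruct (Rle_dec 0 t); destruct (Rle_dec t 1); intros; lra. Qed.

Lemma ex_RInt_glue (f : R -> R) (c : R) (P : R -> Prop) :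
  (forall x y, P x -> P y -> x <= c -> y <= c -> ex_RInt f x y) ->
  (forall x y, P x -> P y -> c <= x -> c <= y -> ex_RInt f x y) -> P c ->
  forall x y, P x -> P y -> ex_RInt f x y.
Proof.
  intros H1 H2 Pc x y Px Py.
  destruct (Rle_dec x c); destruct (Rle_dec y c).
  - auto.
  - apply ex_RInt_Chasles with c; [apply H1|apply H2]; auto; lra.
  - apply ex_RInt_Chasles with c; [apply H2|apply H1]; auto; lra.
  - apply H2; auto; lra.
Qed.

Lemma ex_RInt_chi01 a b : ex_RInt chi01 a b.
Proof.
  apply (ex_RInt_glue chi01 0 (fun _ => True)); auto.
  - intros x y _ _ Hx Hy. apply ex_RInt_ext with (fun _ => 0).
    + intros z Hz. symmetry. apply chi01_neg.
      destruct Hz as [_ Hz]. unfold Rmax in Hz; destruct (Rle_dec x y); lra.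
    + apply ex_RInt_const.
  - intros x y _ _ Hx Hy.
    apply (ex_RInt_glue chi01 1 (fun z => 0 <= z)); auto; try lra.
    + intros u v Hu Hv Hu' Hv'. apply ex_RInt_ext with (fun _ => 1).
      * intros z Hz. symmetry. apply chi01_in.
        unfold Rmin, Rmax in Hz; destruct (Rle_dec u v); lra.
      * apply ex_RInt_const.
    + intros u v Hu Hv Hu' Hv'. apply ex_RInt_ext with (fun _ => 0).
      * intros z Hz. symmetry. apply chi01_gt1.
        unfold Rmin, Rmax in Hz; destruct (Rle_dec u v); lra.
      * apply ex_RInt_const.
Qed.

Lemma Bspl_props n : (forall t, 0 <= Bspl n t <= 1) /\ (forall a b, ex_RInt (Bspl n) a b).
Proof.
  induction n as [|n [Hb He]].
  - split; [apply chi01_bounds| apply ex_RInt_chi01].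
  - assert (Hb' : forall t, 0 <= Bspl (S n) t <= 1).
    { intros t; simpl. split.
      - apply RInt_ge_0; auto; [lra| intros; apply Hb].
      - apply Rle_trans with (RInt (fun _ => 1) (t-1) t).
        + apply RInt_le; auto; [lra| apply ex_RInt_const| intros; apply Hb].
        + rewrite RInt_const. simpl. unfold scal; simpl; unfold mult; simpl. lra. }
    split; auto.
    intros a b. apply lip_ex_RInt with 2.
    intros y z. simpl.
    assert (H1 : forall x, Rabs (Bspl n x) <= 1).
    { intros x. rewrite Rabs_right; [apply Hb| apply Rle_ge, Hb]. }
    rewrite <- (Chas (Bspl n) (y-1) (z-1) y) by auto.
    rewrite <- (Chas (Bspl n) (z-1) z y) by auto.
    replace (RInt (Bspl n) (y - 1) (z - 1) + (RInt (Bspl n) (z - 1) z + RInt (Bspl n) z y) -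
       RInt (Bspl n) (z - 1) z) with (RInt (Bspl n) (y - 1) (z - 1) + RInt (Bspl n) z y) by ring.
    eapply Rle_trans; [apply Rabs_triang|].
    pose proof (abs_RInt1 _ (y-1) (z-1) H1 He).
    pose proof (abs_RInt1 _ z y H1 He).
    replace (z - 1 - (y - 1)) with (z - y) in H by ring.
    rewrite (Rabs_minus_sym z y) in H. lra.
Qed.

Lemma Bspl_b n t : 0 <= Bspl n t <= 1.
Proof. apply Bspl_props. Qed.
Lemma Bspl_ex n a b : ex_RInt (Bspl n) a b.
Proof. apply Bspl_props. Qed.

Lemma Bspl_neg n t : t < 0 -> Bspl n t = 0.
Proof.
  revert t. induction n as [|n IH]; intros t Ht.
  - apply chi01_neg; auto.
  - simpl. rewrite (RInt_ext _ (fun _ => 0)).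
    + rewrite RInt_const. unfold scal; simpl; unfold mult; simpl. ring.
    + intros x Hx. apply IH. unfold Rmax in Hx; destruct (Rle_dec (t-1) t); lra.
Qed.

Definition G n t := RInt (Bspl n) 0 t.

Lemma G_neg n t : t <= 0 -> G n t = 0.
Proof.
  intros Ht. unfold G. rewrite RInt_swap by apply Bspl_ex.
  rewrite (RInt_ext _ (fun _ => 0)).
  - rewrite RInt_const. unfold scal; simpl; unfold mult; simpl. ring.
  - intros x Hx. apply Bspl_neg. unfold Rmax in Hx; destruct (Rle_dec t 0); lra.
Qed.

Lemma G_nonneg n t : 0 <= G n t.
Proof.
  destruct (Rle_dec t 0).
  - rewrite G_neg; auto. lra.
  - unfold G. apply RInt_ge_0; [lra| apply Bspl_ex| intros; apply Bspl_b].
Qed.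

Lemma G_lip n y z : Rabs (G n y - G n z) <= 1 * Rabs (y - z).
Proof.
  assert (E : G n y - G n z = RInt (Bspl n) z y).
  { unfold G. pose proof (Chas (Bspl n) 0 z y (Bspl_ex _ _ _) (Bspl_ex _ _ _)). lra. }
  rewrite E.
  rewrite Rmult_1_l.
  apply abs_RInt1; [| apply Bspl_ex].
  intros x. rewrite Rabs_right; [apply Bspl_b| apply Rle_ge, Bspl_b].
Qed.

Lemma BsplS_G n t : Bspl (S n) t = G n t - G n (t - 1).
Proof.
  simpl. unfold G. pose proof (Chas (Bspl n) 0 (t-1) t (Bspl_ex _ _ _) (Bspl_ex _ _ _)). lra.
Qed.

Lemma is_RInt_pow n t :
  is_RInt (fun x => x ^ n / INR (fact n)) 0 t (t ^ S n / INR (fact (S n))).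
Proof.
  assert (H := is_RInt_derive (V:=R_CompleteNormedModule)
    (fun x => x ^ S n / INR (fact (S n))) (fun x => x ^ n / INR (fact n)) 0 t).
  replace (t ^ S n / INR (fact (S n))) with
    (minus ((fun x => x ^ S n / INR (fact (S n))) t) ((fun x => x ^ S n / INR (fact (S n))) 0)).
  2:{ change (t ^ S n / INR (fact (S n)) - 0 ^ S n / INR (fact (S n)) = t ^ S n / INR (fact (S n))). rewrite pow_i by lia. unfold Rdiv. rewrite Rmult_0_l. apply Rminus_0_r. }
  apply H.
  - intros x _. auto_derive; auto.
    change (match n with 0%nat => 1 | S _ => INR n + 1 end) with (INR (S n)).
    rewrite plus_INR, mult_INR.
    pose proof (INR_fact_neq_0 n). pose proof (not_0_INR (S n) (Nat.neq_succ_0 n)).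
    rewrite S_INR in *. field. split; auto. intros E.
    replace (INR (fact n) + INR n * INR (fact n)) with ((INR n + 1) * INR (fact n)) in E by ring.
    apply Rmult_integral in E. tauto.
  - intros x _. apply (continuity_pt_filterlim (fun x => x ^ n / INR (fact n))).
    apply continuity_pt_div; [apply derivable_continuous_pt, derivable_pt_pow| apply continuity_pt_const; intros a b; auto| apply INR_fact_neq_0].
Qed.

Lemma Bspl_pow n t : 0 <= t -> Bspl n t <= t ^ n / INR (fact n).
Proof.
  revert t; induction n as [|n IH]; intros t Ht.
  - simpl. pose proof (chi01_bounds t). lra.
  - rewrite BsplS_G. pose proof (G_nonneg n (t-1)).
    apply Rle_trans with (G n t); [lra|].
    unfold G. rewrite <- (is_RInt_unique _ _ _ _ (is_RInt_pow n t)).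
    apply RInt_le; auto; [apply Bspl_ex| eexists; apply is_RInt_pow|].
    intros x Hx. apply IH. lra.
Qed.

Definition ec (B : R) (n : nat) := B ^ n / INR (fact n).

Lemma ec_ex B : ex_series (ec B).
Proof.
  exists (exp B). pose proof (is_exp_Reals B) as H.
  unfold is_pseries in H. eapply is_series_ext; [|exact H].
  intros n. unfold ec, scal; simpl. unfold mult; simpl. rewrite pow_n_pow. unfold Rdiv. ring.
Qed.

Lemma ec_nonneg B n : 0 <= B -> 0 <= ec B n.
Proof.
  intros. unfold ec. apply Rdiv_le_0_compat; [apply pow_le; auto| apply INR_fact_lt_0].
Qed.

Lemma Bspl_le_ec n x B : x <= B -> Bspl n x <= ec (Rmax B 0) n.
Proof.
  intros Hx. destruct (Rle_dec 0 x).
  - eapply Rle_trans; [apply Bspl_pow; auto|]. unfold ec.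
    unfold Rdiv. apply Rmult_le_compat_r; [left; apply Rinv_0_lt_compat, INR_fact_lt_0|].
    apply pow_incr. split; auto. eapply Rle_trans; [exact Hx| apply Rmax_l].
  - rewrite Bspl_neg by lra. apply ec_nonneg, Rmax_r.
Qed.

Lemma Series_nonneg (a : nat -> R) : (forall n, 0 <= a n) -> ex_series a -> 0 <= Series a.
Proof.
  intros H He.
  replace 0 with (Series (fun n => 0 * a n)).
  - apply Series_le; auto. intros n. rewrite Rmult_0_l. split; [lra| apply H].
  - rewrite Series_scal_l. ring.
Qed.

Lemma lim_partial (a : nat -> R) : ex_series a -> is_lim_seq (sum_f_R0 a) (Series a).
Proof.
  intros He. apply Series_correct in He.
  eapply is_lim_seq_ext; [| exact He]. intros n. apply sum_n_Reals.
Qed.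

Lemma tail_eq (a : nat -> R) N : ex_series a ->
  Series a - sum_f_R0 a N = Series (fun k => a (S N + k)%nat).
Proof.
  intros He. rewrite (Series_incr_n a (S N)) by (auto; lia). simpl pred. ring.
Qed.

Lemma partial_le (a : nat -> R) N : (forall n, 0 <= a n) -> ex_series a -> sum_f_R0 a N <= Series a.
Proof.
  intros H He. pose proof (tail_eq a N He).
  assert (0 <= Series (fun k => a (S N + k)%nat)).
  { apply Series_nonneg; auto. apply (ex_series_incr_n a (S N)); auto. }
  lra.
Qed.

Lemma tail_le (a c : nat -> R) N : (forall n, 0 <= a n <= c n) -> ex_series c ->
  ex_series a /\ Series a - sum_f_R0 a N <= Series c - sum_f_R0 c N.
Proof.
  intros H Hc.
  assert (Ha : ex_series a).
  { apply (ex_series_le (K:=R_AbsRing) (V:=R_CompleteNormedModule)) with c; auto. intros n. unfold norm; simpl. unfold abs; simpl.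
    rewrite Rabs_right; [apply H| apply Rle_ge, H]. }
  split; auto.
  rewrite !tail_eq by auto.
  apply Series_le; [intros; apply H|]. apply (ex_series_incr_n c (S N)); auto.
Qed.

Lemma RInt_sum (f : nat -> R -> R) a b N : (forall n, ex_RInt (f n) a b) ->
  ex_RInt (fun x => sum_f_R0 (fun n => f n x) N) a b /\
  RInt (fun x => sum_f_R0 (fun n => f n x) N) a b = sum_f_R0 (fun n => RInt (f n) a b) N.
Proof.
  intros H. induction N as [|N [IH1 IH2]].
  - simpl. split; auto.
  - simpl. split.
    + apply (ex_RInt_plus (V:=R_NormedModule) _ _ a b IH1 (H (S N))).
    + rewrite <- IH2. exact (RInt_plus (V:=R_CompleteNormedModule) _ _ a b IH1 (H (S N))).
Qed.

Lemma GL (f : nat -> R -> R) (c : nat -> R) a b (lo hi : R -> R) :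
  a <= b -> (forall n x, a <= x <= b -> 0 <= f n x <= c n) -> ex_series c ->
  (forall n, ex_RInt (f n) a b) -> ex_RInt lo a b -> ex_RInt hi a b ->
  (forall x, a <= x <= b -> lo x <= Series (fun n => f n x) <= hi x) ->
  ex_series (fun n => RInt (f n) a b) /\
  RInt lo a b <= Series (fun n => RInt (f n) a b) <= RInt hi a b.
Proof.
  intros Hab Hf Hc Hi Hlo Hhi Hb.
  set (r := fun n => RInt (f n) a b).
  assert (Hr : forall n, 0 <= r n <= (b - a) * c n).
  { intros n. unfold r. split.
    - apply RInt_ge_0; auto. intros x Hx. apply Hf; lra.
    - apply Rle_trans with (RInt (fun _ => c n) a b).
      + apply RInt_le; auto. apply ex_RInt_const. intros x Hx; apply Hf; lra.
      + rewrite RInt_const. unfold scal; simpl; unfold mult; simpl. lra. }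
  assert (Hcb : ex_series (fun n => (b - a) * c n)).
  { apply (ex_series_scal_l (V:=R_NormedModule) (b - a) c Hc). }
  assert (Her : ex_series r).
  { apply (ex_series_le (K:=R_AbsRing) (V:=R_CompleteNormedModule)) with (fun n => (b - a) * c n); auto.
    intros n. unfold norm; simpl. unfold abs; simpl.
    rewrite Rabs_right; [apply Hr| apply Rle_ge, Hr]. }
  split; [exact Her|].
  pose proof (lim_partial r Her) as Lr.
  split.
  -
    set (T := fun N => Series c - sum_f_R0 c N).
    assert (LT : is_lim_seq T 0).
    { unfold T. replace 0 with (Series c - Series c) by ring.
      apply is_lim_seq_minus'; [apply is_lim_seq_const| apply lim_partial; auto]. }
    assert (Hk : forall N, RInt lo a b <= sum_f_R0 r N + (b - a) * T N).
    { intros N.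
      destruct (RInt_sum f a b N Hi) as [E1 E2].
      assert (RInt (fun x => lo x - T N) a b <= RInt (fun x => sum_f_R0 (fun n => f n x) N) a b).
      { apply RInt_le; auto.
        - apply (ex_RInt_minus (V:=R_NormedModule) _ _ a b Hlo (ex_RInt_const _ _ (T N))).
        - intros x Hx.
          assert (Hx' : a <= x <= b) by lra.
          destruct (tail_le (fun n => f n x) c N (fun n => Hf n x Hx') Hc) as [_ H2].
          pose proof (Hb x Hx'). unfold T. lra. }
      rewrite E2 in H.
      pose proof (RInt_minus (V:=R_CompleteNormedModule) _ _ a b Hlo (ex_RInt_const _ _ (T N))) as E3.
      change (RInt (fun x => lo x - T N) a b = RInt lo a b - RInt (fun _ => T N) a b) in E3.
      rewrite E3 in H.
      rewrite RInt_const in H. unfold minus, plus, opp, scal in H; simpl in H.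
      unfold mult in H; simpl in H. unfold r. lra. }
    assert (L2 : is_lim_seq (fun N => sum_f_R0 r N + (b - a) * T N) (Series r + (b - a) * 0)).
    { apply is_lim_seq_plus'; auto. 
      apply (is_lim_seq_scal_l T (b - a) 0 LT). }
    pose proof (is_lim_seq_le (fun _ => RInt lo a b) _ (RInt lo a b) _ Hk (is_lim_seq_const _) L2).
    simpl in H. lra.
  - assert (Hk : forall N, sum_f_R0 r N <= RInt hi a b).
    { intros N. destruct (RInt_sum f a b N Hi) as [E1 E2].
      unfold r. rewrite <- E2. apply RInt_le; auto.
      intros x Hx. assert (Hx' : a <= x <= b) by lra.
      destruct (tail_le (fun n => f n x) c N (fun n => Hf n x Hx') Hc) as [Hex _].
      pose proof (partial_le (fun n => f n x) N (fun n => proj1 (Hf n x Hx')) Hex).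
      pose proof (Hb x Hx'). lra. }
    pose proof (is_lim_seq_le _ (fun _ => RInt hi a b) _ (RInt hi a b) Hk Lr (is_lim_seq_const _)).
    simpl in H. lra.
Qed.

Definition Good (F : R -> R) (A : R -> R -> R) : Prop :=
 (forall a b M, a <= b -> (forall x, a <= x <= b -> F x <= M) -> A a b <= (b - a) * M) /\
 (forall a b m, a <= b -> (forall x, a <= x <= b -> m <= F x) -> (b - a) * m <= A a b) /\
 (forall a k b, a <= k <= b -> A a b = A a k + A k b) /\
 (forall s, 1 < s -> F s = A (s-1) s) /\
 (forall a b, exists B, forall x, a <= x <= b -> F x <= B) /\
 (forall a b, exists B, forall x, a <= x <= b -> B <= F x).

Lemma Good_neg F A : Good F A -> Good (fun x => - F x) (fun a b => - A a b).
Proof.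
  intros [H1 [H2 [H3 [H4 [H5 H6]]]]]. repeat split.
  - intros a b M Hab HM.
    pose proof (H2 a b (- M) Hab). assert ((b - a) * - M <= A a b).
    { apply H; intros x Hx; specialize (HM x Hx); lra. } lra.
  - intros a b m Hab Hm. assert (A a b <= (b - a) * - m).
    { apply H1; auto; intros x Hx; specialize (Hm x Hx); lra. } lra.
  - intros a k b Hk. rewrite (H3 a k b Hk). ring.
  - intros s Hs. rewrite (H4 s Hs). auto.
  - intros a b. destruct (H6 a b) as [B HB]. exists (- B). intros x Hx; specialize (HB x Hx); lra.
  - intros a b. destruct (H5 a b) as [B HB]. exists (- B). intros x Hx; specialize (HB x Hx); lra.
Qed.

Lemma small_powq q D e : 0 <= q < 1 -> 0 < e -> exists j, D * q ^ j < e.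
Proof.
  intros Hq He.
  destruct (pow_lt_1_zero q) with (e / (Rabs D + 1)) as [N HN].
  - rewrite Rabs_right; lra.
  - apply Rdiv_lt_0_compat; auto. pose proof (Rabs_pos D); lra.
  - exists N. specialize (HN N (le_n N)).
    assert (0 <= q ^ N) by (apply pow_le; lra).
    rewrite Rabs_right in HN by lra.
    pose proof (Rabs_pos D). pose proof (Rle_abs D).
    apply Rle_lt_trans with ((Rabs D + 1) * q ^ N).
    + apply Rmult_le_compat_r; lra.
    + apply Rmult_lt_reg_l with (/ (Rabs D + 1)). apply Rinv_0_lt_compat; lra.
      rewrite <- Rmult_assoc, Rinv_l by lra. unfold Rdiv in HN. lra.
Qed.

Lemma small_pow D e : 0 < e -> exists j, D * (/2) ^ j < e.
Proof. intros; apply small_powq; auto; lra. Qed.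

Lemma prop_up_half F A a M : Good F A -> 1 <= a ->
  (forall x, a - 1 <= x <= a -> F x <= M) -> forall x, a <= x <= a + /2 -> F x <= M.
Proof.
  intros G Ha HW.
  destruct G as [H1 [H2 [H3 [H4 [H5 H6]]]]].
  destruct (H5 a (a + /2)) as [B HB].
  set (D := Rmax B M - M).
  assert (HD : 0 <= D) by (unfold D; pose proof (Rmax_r B M); lra).
  assert (Cl : forall j x, a <= x <= a + /2 -> F x <= M + D * (/2) ^ j).
  { induction j as [|j IH]; intros x Hx.
    - simpl. unfold D. pose proof (Rmax_l B M). specialize (HB x Hx). lra.
    - destruct (Req_dec x a) as [E|E].
      + subst. assert (0 <= D * (/2) ^ S j) by (apply Rmult_le_pos; auto; apply pow_le; lra).
        specialize (HW a). lra.
      + rewrite (H4 x) by lra. rewrite (H3 (x - 1) a x) by lra.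
        assert (E1 : A (x - 1) a <= (a - (x - 1)) * M).
        { apply H1; [lra|]. intros y Hy. apply HW. lra. }
        assert (E2 : A a x <= (x - a) * (M + D * (/2) ^ j)).
        { apply H1; [lra|]. intros y Hy. apply IH. lra. }
        assert (E3 : (x - a) * (D * (/2) ^ j) <= /2 * (D * (/2) ^ j)).
        { apply Rmult_le_compat_r; [apply Rmult_le_pos; auto; apply pow_le; lra| lra]. }
        simpl. lra. }
  intros x Hx. destruct (Rle_dec (F x) M) as [|Hn]; auto.
  destruct (small_pow D (F x - M)) as [j Hj]; [lra|].
  specialize (Cl j x Hx). lra.
Qed.

Lemma prop_up F A a M : Good F A -> 1 <= a ->
  (forall x, a - 1 <= x <= a -> F x <= M) -> forall x, a - 1 <= x -> F x <= M.
Proof.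
  intros G Ha HW.
  assert (K : forall k, forall x, a - 1 <= x <= a + INR k / 2 -> F x <= M).
  { induction k as [|k IH]; intros x Hx.
    - simpl in Hx. apply HW. lra.
    - rewrite S_INR in Hx.
      destruct (Rle_dec x (a + INR k / 2)); [apply IH; lra|].
      apply (prop_up_half F A (a + INR k / 2) M G).
      + pose proof (pos_INR k); lra.
      + intros y Hy. apply IH. pose proof (pos_INR k); lra.
      + lra. }
  intros x Hx. destruct (INR_unbounded (2 * (x - a))) as [k Hk].
  apply (K k). lra.
Qed.

Lemma prop_lo F A a m : Good F A -> 1 <= a ->
  (forall x, a - 1 <= x <= a -> m <= F x) -> forall x, a - 1 <= x -> m <= F x.
Proof.
  intros G Ha HW x Hx.
  pose proof (prop_up _ _ a (- m) (Good_neg F A G) Ha) as P.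
  assert (- F x <= - m); [apply P; auto; intros y Hy; specialize (HW y Hy); lra| lra].
Qed.

Lemma lipS F A a m M : Good F A -> 1 < a ->
  (forall x, a - 1 <= x -> m <= F x <= M) ->
  forall s s', a <= s' <= s -> F s - F s' <= (s - s') * (M - m).
Proof.
  intros G Ha HB s s' Hs.
  destruct G as [H1 [H2 [H3 [H4 [H5 H6]]]]].
  rewrite (H4 s), (H4 s') by lra.
  assert (E : A (s' - 1) (s - 1) + A (s - 1) s = A (s' - 1) s' + A s' s).
  { rewrite <- (H3 (s' - 1) (s - 1) s) by lra. apply H3. lra. }
  assert (E1 : A s' s <= (s - s') * M).
  { apply H1; [lra|]. intros x Hx. apply HB. lra. }
  assert (E2 : (s - 1 - (s' - 1)) * m <= A (s' - 1) (s - 1)).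
  { apply H2; [lra|]. intros x Hx. apply HB. lra. }
  lra.
Qed.

Lemma contr_up F A a m M : Good F A -> 1 < a ->
  (forall x, a - 1 <= x <= a -> m <= F x <= M) -> F a <= (m + M) / 2 ->
  forall x, a <= x <= a + 1 -> F x <= M - (M - m) / 16.
Proof.
  intros G Ha HW Hmid.
  assert (HB : forall x, a - 1 <= x -> m <= F x <= M).
  { intros x Hx. split.
    - apply (prop_lo F A a m G); auto; [lra| intros; apply HW; auto].
    - apply (prop_up F A a M G); auto; [lra| intros; apply HW; auto]. }
  assert (HD : 0 <= M - m) by (pose proof (HW a); lra).
  assert (C1 : forall x, a <= x <= a + /4 -> F x <= M - (M - m) / 4).
  { intros x Hx. pose proof (lipS F A a m M G Ha HB x a (conj (Rle_refl a) (proj1 Hx))).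
    assert ((x - a) * (M - m) <= /4 * (M - m)) by (apply Rmult_le_compat_r; lra).
    lra. }
  intros x Hx. destruct (Rle_dec x (a + /4)).
  - pose proof (C1 x (conj (proj1 Hx) r)). lra.
  - destruct G as [H1 [H2 [H3 [H4 [H5 H6]]]]].
    rewrite (H4 x) by lra. rewrite (H3 (x - 1) a x) by lra. rewrite (H3 a (a + /4) x) by lra.
    assert (E1 : A (x - 1) a <= (a - (x - 1)) * M).
    { apply H1; [lra|]. intros y Hy. apply HB. lra. }
    assert (E2 : A a (a + /4) <= (a + /4 - a) * (M - (M - m) / 4)).
    { apply H1; [lra|]. intros y Hy. apply C1. lra. }
    assert (E3 : A (a + /4) x <= (x - (a + /4)) * M).
    { apply H1; [lra|]. intros y Hy. apply HB. lra. }
    lra.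
Qed.

Lemma contr F A a m M : Good F A -> 1 < a ->
  (forall x, a - 1 <= x <= a -> m <= F x <= M) ->
  exists m' M', M' - m' <= 15/16 * (M - m) /\ forall x, a <= x <= a + 1 -> m' <= F x <= M'.
Proof.
  intros G Ha HW.
  assert (HB : forall x, a - 1 <= x -> m <= F x <= M).
  { intros x Hx. split.
    - apply (prop_lo F A a m G); auto; [lra| intros; apply HW; auto].
    - apply (prop_up F A a M G); auto; [lra| intros; apply HW; auto]. }
  destruct (Rle_dec (F a) ((m + M) / 2)).
  - exists m, (M - (M - m) / 16). split; [lra|].
    intros x Hx. split; [apply HB; lra|]. apply (contr_up F A a m M); auto.
  - exists (m + (M - m) / 16), M. split; [lra|].
    intros x Hx. split; [|apply HB; lra].
    pose proof (contr_up _ _ a (- M) (- m) (Good_neg F A G) Ha) as P.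
    assert (- F x <= - m - (- m - - M) / 16); [|lra].
    apply P; auto; [intros y Hy; specialize (HW y Hy); lra| lra].
Qed.

Lemma iter F A m0 M0 : Good F A -> (forall x, 1 <= x <= 2 -> m0 <= F x <= M0) ->
  forall k, exists m M, M - m <= (15/16) ^ k * (M0 - m0) /\ forall x, 1 + INR k <= x <= 2 + INR k -> m <= F x <= M.
Proof.
  intros G H0. induction k as [|k [m [M [Hd Hw]]]].
  - exists m0, M0. simpl. split; [lra|]. intros x Hx; apply H0; lra.
  - destruct (contr F A (2 + INR k) m M G) as [m' [M' [Hd' Hw']]].
    + pose proof (pos_INR k); lra.
    + intros x Hx; apply Hw; lra.
    + exists m', M'. split.
      * simpl. assert (15/16 * (M - m) <= 15/16 * ((15/16) ^ k * (M0 - m0))) by (apply Rmult_le_compat_l; lra). lra.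
      * intros x Hx. rewrite S_INR in Hx. apply Hw'. lra.
Qed.

Lemma abs_limit F A m0 M0 L : Good F A -> (forall x, 1 <= x <= 2 -> m0 <= F x <= M0) ->
  (forall t m M, 1 <= t -> (forall x, t - 1 <= x <= t -> m <= F x <= M) -> m <= L <= M) ->
  forall e, 0 < e -> exists T, forall x, T < x -> Rabs (F x - L) < e.
Proof.
  intros G H0 HI e He.
  destruct (small_powq (15/16) (M0 - m0) e) as [k Hk]; [lra| auto|].
  destruct (iter F A m0 M0 G H0 k) as [m [M [Hd Hw]]].
  assert (Hpow : (15/16) ^ k * (M0 - m0) = (M0 - m0) * (15/16) ^ k) by ring.
  assert (HB : forall x, 1 + INR k <= x -> m <= F x <= M).
  { intros x Hx. pose proof (pos_INR k). split.
    - apply (prop_lo F A (2 + INR k) m G); [lra| intros; apply Hw; lra| lra].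
    - apply (prop_up F A (2 + INR k) M G); [lra| intros; apply Hw; lra| lra]. }
  pose proof (HI (2 + INR k) m M) as HL.
  assert (m <= L <= M).
  { apply HL. pose proof (pos_INR k); lra. intros x Hx; apply Hw; lra. }
  exists (2 + INR k). intros x Hx. specialize (HB x ltac:(lra)).
  apply Rabs_lt_between'. lra.
Qed.

Definition Sf t := Series (fun n => Bspl n t).
Definition Af a b := Series (fun n => RInt (Bspl n) a b).

Lemma S_ex t : ex_series (fun n => Bspl n t).
Proof.
  apply (tail_le _ (ec (Rmax t 0)) 0); [| apply ec_ex].
  intros n. split; [apply Bspl_b| apply Bspl_le_ec; lra].
Qed.

Lemma S_bounds x B : x <= B -> 0 <= Sf x <= Series (ec (Rmax B 0)).
Proof.
  intros Hx. unfold Sf. split.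
  - apply Series_nonneg; [intros; apply Bspl_b| apply S_ex].
  - apply Series_le; [| apply ec_ex]. intros n. split; [apply Bspl_b| apply Bspl_le_ec; auto].
Qed.

Lemma A_GL a b lo hi : a <= b -> (forall x, a <= x <= b -> lo <= Sf x <= hi) ->
  ex_series (fun n => RInt (Bspl n) a b) /\ (b - a) * lo <= Af a b <= (b - a) * hi.
Proof.
  intros Hab H.
  destruct (GL Bspl (ec (Rmax b 0)) a b (fun _ => lo) (fun _ => hi) Hab) as [E1 [E2 E3]].
  - intros n x Hx. split; [apply Bspl_b| apply Bspl_le_ec; lra].
  - apply ec_ex.
  - intros; apply Bspl_ex.
  - apply ex_RInt_const.
  - apply ex_RInt_const.
  - exact H.
  - rewrite !RInt_const in E2, E3. unfold scal in E2, E3; simpl in E2, E3.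
    unfold mult in E2, E3; simpl in E2, E3. unfold Af. auto.
Qed.

Lemma A_ex a b : a <= b -> ex_series (fun n => RInt (Bspl n) a b).
Proof.
  intros Hab. apply (A_GL a b 0 (Series (ec (Rmax b 0)))); auto.
  intros x Hx. apply S_bounds. lra.
Qed.

Lemma Good_S : Good Sf Af.
Proof.
  repeat split.
  - intros a b M Hab HM. apply (A_GL a b 0 M); auto.
    intros x Hx. split; [apply (S_bounds x b); lra| auto].
  - intros a b m Hab Hm. apply (A_GL a b m (Series (ec (Rmax b 0)))); auto.
    intros x Hx. split; [auto| apply (S_bounds x b); lra].
  - intros a k b Hk. unfold Af.
    rewrite <- Series_plus by (apply A_ex; lra).
    apply Series_ext. intros n. symmetry. apply Chas; apply Bspl_ex.
  - intros s Hs. unfold Sf, Af. rewrite Series_incr_1 by apply S_ex.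
    simpl Bspl at 1. rewrite chi01_gt1 by lra. rewrite Rplus_0_l. reflexivity.
  - intros a b. exists (Series (ec (Rmax b 0))). intros x Hx. apply S_bounds. lra.
  - intros a b. exists 0. intros x Hx. apply (S_bounds x x). lra.
Qed.

Lemma G_ex n a b : ex_RInt (G n) a b.
Proof. apply lip_ex_RInt with 1. apply G_lip. Qed.

Lemma Gsh_ex n a b : ex_RInt (fun y => G n (y - 1)) a b.
Proof.
  apply lip_ex_RInt with 1. intros y z. eapply Rle_trans; [apply G_lip|].
  replace (y - 1 - (z - 1)) with (y - z) by ring. lra.
Qed.

Lemma G_S n t : G (S n) t = RInt (G n) (t - 1) t.
Proof.
  unfold G at 1.
  rewrite (RInt_ext (Bspl (S n)) (fun y => G n y - G n (y - 1))) by (intros; apply BsplS_G).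
  pose proof (RInt_minus (V:=R_CompleteNormedModule) _ _ 0 t (G_ex n 0 t) (Gsh_ex n 0 t)) as E.
  change (RInt (fun y => G n y - G n (y - 1)) 0 t = RInt (G n) 0 t - RInt (fun y => G n (y - 1)) 0 t) in E.
  rewrite E.
  assert (E2 : RInt (fun y => G n (y - 1)) 0 t = RInt (G n) (-1) (t - 1)).
  { rewrite (RInt_ext (fun y => G n (y - 1)) (fun y => scal 1 (G n (1 * y + -1)))).
    - rewrite (RInt_comp_lin (V:=R_CompleteNormedModule)).
      + f_equal; ring.
      + apply G_ex.
    - intros x _. symmetry. rewrite (scal_one (V:=R_NormedModule)). f_equal. ring. }
  rewrite E2.
  assert (E3 : RInt (G n) (-1) 0 = 0).
  { rewrite (RInt_ext (G n) (fun _ => 0)).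
    - rewrite RInt_const. unfold scal; simpl; unfold mult; simpl. ring.
    - intros x Hx. apply G_neg. unfold Rmax in Hx. destruct (Rle_dec (-1) 0); lra. }
  pose proof (Chas (G n) (-1) 0 (t - 1) (G_ex _ _ _) (G_ex _ _ _)).
  pose proof (Chas (G n) 0 (t - 1) t (G_ex _ _ _) (G_ex _ _ _)). lra.
Qed.

Definition J n t := RInt (fun y => RInt (Bspl n) y t) (t - 1) t.

Lemma RInt_yt n y t : RInt (Bspl n) y t = G n t - G n y.
Proof. unfold G. pose proof (Chas (Bspl n) 0 y t (Bspl_ex _ _ _) (Bspl_ex _ _ _)). lra. Qed.

Lemma J_eq n t : J n t = G n t - G (S n) t.
Proof.
  unfold J. rewrite (RInt_ext _ (fun y => G n t - G n y)) by (intros; apply RInt_yt).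
  pose proof (RInt_minus (V:=R_CompleteNormedModule) _ _ (t - 1) t (ex_RInt_const _ _ (G n t)) (G_ex n (t - 1) t)) as E.
  change (RInt (fun y => G n t - G n y) (t - 1) t = RInt (fun _ => G n t) (t - 1) t - RInt (G n) (t - 1) t) in E.
  rewrite E, G_S, RInt_const. unfold scal; simpl; unfold mult; simpl. ring.
Qed.

Lemma J_sum t N : sum_f_R0 (fun n => J n t) N = G 0 t - G (S N) t.
Proof.
  induction N as [|N IH]; simpl sum_f_R0.
  - apply J_eq.
  - rewrite IH, J_eq. ring.
Qed.

Lemma G0_val t : 1 <= t -> G 0 t = 1.
Proof.
  intros Ht. unfold G. change (RInt chi01 0 t = 1).
  pose proof (Chas chi01 0 1 t (ex_RInt_chi01 _ _) (ex_RInt_chi01 _ _)) as EE.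
  rewrite <- EE.
  rewrite (RInt_ext chi01 (fun _ => 1) 0 1).
  2:{ intros x Hx. apply chi01_in. unfold Rmin, Rmax in Hx. destruct (Rle_dec 0 1); lra. }
  rewrite (RInt_ext chi01 (fun _ => 0) 1 t).
  2:{ intros x Hx. apply chi01_gt1. unfold Rmin, Rmax in Hx. destruct (Rle_dec 1 t); lra. }
  rewrite !RInt_const. unfold scal; simpl; unfold mult; simpl. ring.
Qed.

Lemma G_small k t : 0 <= t -> 0 <= G k t <= t * ec (Rmax t 0) k.
Proof.
  intros Ht. split; [apply G_nonneg|]. unfold G.
  apply Rle_trans with (RInt (fun _ => ec (Rmax t 0) k) 0 t).
  - apply RInt_le; auto; [apply Bspl_ex| apply ex_RInt_const|].
    intros x Hx. apply Bspl_le_ec. lra.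
  - rewrite RInt_const. unfold scal; simpl; unfold mult; simpl. lra.
Qed.

Lemma J_series t : 1 <= t -> Series (fun n => J n t) = 1.
Proof.
  intros Ht. apply is_series_unique.
  assert (L : is_lim_seq (sum_f_R0 (fun n => J n t)) 1).
  { apply is_lim_seq_ext with (fun N => G 0 t - G (S N) t).
    - intros N; symmetry; apply J_sum.
    - replace 1 with (1 - 0) by ring.
      apply is_lim_seq_minus'.
      + rewrite G0_val by auto. apply is_lim_seq_const.
      + apply is_lim_seq_le_le with (fun _ => 0) (fun N => t * ec (Rmax t 0) (S N)).
        * intros N. apply G_small; lra.
        * apply is_lim_seq_const.
        * replace (Finite 0) with (Rbar_mult t 0) by (simpl; f_equal; ring).
          apply (is_lim_seq_scal_l (fun N => ec (Rmax t 0) (S N)) t 0).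
          apply (is_lim_seq_incr_1 (ec (Rmax t 0)) 0).
          apply ex_series_lim_0, ec_ex. }
  apply (is_lim_seq_ext _ _ _ (fun N => eq_sym (sum_n_Reals _ N))) in L.
  exact L.
Qed.

Lemma lin_lip t c y z : Rabs ((t - y) * c - (t - z) * c) <= Rabs c * Rabs (y - z).
Proof.
  replace ((t - y) * c - (t - z) * c) with ((z - y) * c) by ring.
  rewrite Rabs_mult, (Rabs_minus_sym z y). lra.
Qed.

Lemma tri_int c t : RInt (fun y => (t - y) * c) (t - 1) t = c / 2.
Proof.
  apply is_RInt_unique.
  assert (H := is_RInt_derive (V:=R_CompleteNormedModule)
    (fun y => - ((t - y) ^ 2) / 2 * c) (fun y => (t - y) * c) (t - 1) t).
  replace (c / 2) with (minus ((fun y => - ((t - y) ^ 2) / 2 * c) t) ((fun y => - ((t - y) ^ 2) / 2 * c) (t - 1))).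
  2:{ change (- ((t - t) ^ 2) / 2 * c - - ((t - (t - 1)) ^ 2) / 2 * c = c / 2). field. }
  apply H.
  - intros x _. auto_derive; auto. unfold Rminus. field.
  - intros x _. apply lip_cont with (Rabs c). intros; apply lin_lip.
Qed.

Lemma ident t m M : 1 <= t -> (forall x, t - 1 <= x <= t -> m <= Sf x <= M) -> m <= 2 <= M.
Proof.
  intros Ht HB.
  destruct (GL (fun n y => RInt (Bspl n) y t) (ec (Rmax t 0)) (t - 1) t
             (fun y => (t - y) * m) (fun y => (t - y) * M)) as [_ [L U]].
  - lra.
  - intros n y Hy. split.
    + apply RInt_ge_0; [lra| apply Bspl_ex| intros; apply Bspl_b].
    + apply Rle_trans with (RInt (fun _ => ec (Rmax t 0) n) y t).
      * apply RInt_le; [lra| apply Bspl_ex| apply ex_RInt_const|].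
        intros x Hx. apply Bspl_le_ec. lra.
      * rewrite RInt_const. unfold scal; simpl; unfold mult; simpl.
        assert (0 <= ec (Rmax t 0) n) by (apply ec_nonneg, Rmax_r).
        assert ((t - y) * ec (Rmax t 0) n <= 1 * ec (Rmax t 0) n) by (apply Rmult_le_compat_r; lra).
        lra.
  - apply ec_ex.
  - intros n. apply lip_ex_RInt with 1. intros y z. rewrite !RInt_yt.
    replace (G n t - G n y - (G n t - G n z)) with (G n z - G n y) by ring.
    eapply Rle_trans; [apply G_lip|]. rewrite (Rabs_minus_sym z y). lra.
  - apply lip_ex_RInt with (Rabs m). intros; apply lin_lip.
  - apply lip_ex_RInt with (Rabs M). intros; apply lin_lip.
  - intros x Hx. destruct Good_S as [H1 [H2 _]].
    change (Series (fun n => RInt (Bspl n) x t)) with (Af x t). split.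
    + apply H2; [lra|]. intros y Hy. apply HB. lra.
    + apply H1; [lra|]. intros y Hy. apply HB. lra.
  - change (Series (fun n => RInt (fun y => RInt (Bspl n) y t) (t - 1) t)) with (Series (fun n => J n t)) in L, U.
    rewrite J_series in L, U by auto. rewrite tri_int in L, U. lra.
Qed.

Theorem mainTheorem13 :
  (forall t : R, ex_series (fun n : nat => Bspl n t)) /\
  is_lim (fun t : R => Series (fun n : nat => Bspl n t)) p_infty 2.
Proof.
  split; [apply S_ex|].
  apply is_lim_spec. intros eps. simpl.
  destruct (abs_limit Sf Af 0 (Series (ec (Rmax 2 0))) 2 Good_S) with (e := pos eps) as [T HT].
  - intros x Hx. apply S_bounds. lra.
  - intros t m M Ht Hw. apply (ident t m M Ht Hw).
  - apply cond_pos.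
  - exists T. intros x Hx. apply HT. auto.
Qed.
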